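(* Let $p$ be a prime and $\theta\in\mathbb{F}_p((X^{-1}))$. Then $$\inf_{r\geq 0,\ Q\in\mathbb{F}_p[X]\setminus\{0\}} |Q|\cdot\|X^rQ\theta\|>0$$ (i.e. $\theta$ is a counterexample to the $X$-adic Littlewood conjecture over $\mathbb{F}_p$) if and only if there is a constant $D\in\mathbb{N}_0$ such that for every $r\geq0$ the partial quotients $A^{(r)}_j$ of the simple continued fraction expansion $[A^{(r)}_1,A^{(r)}_2,\dots]$ of $\langle X^r\theta\rangle$ satisfy $\deg(A^{(r)}_j)\leq D+1$ for all $j\geq1$. Moreover, if such a $D$ exists (we then say $\theta$ has finite deficiency $D(\theta)=D$), then $$\inf_{r\geq 0,\ Q\in\mathbb{F}_p[X]\setminus\{0\}} |Q|\cdot\|X^rQ\theta\|\geq 2^{-(D+1)}.$$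
   Context: $\mathbb{F}_p((X^{-1}))$ is the field of formal Laurent series $\theta=\sum_{i=j}^\infty a_iX^{-i}$ over $\mathbb{F}_p$ ($a_j\ne0$), with $\deg(\theta)=-j$, $|\theta|=2^{-j}$ ($|0|=0$), fractional part $\langle\theta\rangle=\sum_{i\ge\max\{1,j\}}a_iX^{-i}$, and $\|\theta\|=|\langle\theta\rangle|$. For a Laurent series $\eta$ with $\langle\eta\rangle=\eta$, its simple continued fraction expansion $\eta=[A_1,A_2,\dots]$ (i.e. $[0;A_1,A_2,\dots]$) has polynomial partial quotients $A_i\in\mathbb{F}_p[X]$ of degree $\ge1$; convergents $P_h/Q_h=[0;A_1,\dots,A_h]$ have $\deg Q_h=\sum_{i=1}^h\deg A_i$. *)

(* Defs.v *)
From HB Require Import structures.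
From mathcomp Require Import all_boot all_order all_algebra.
From mathcomp Require Import boolp reals.
Set Implicit Arguments. Unset Strict Implicit. Unset Printing Implicit Defensive.
Import Order.TTheory GRing.Theory Num.Theory.
Local Open Scope ring_scope.

(* Formal Laurent series in X^{-1} over a ring F:
   theta = sum_{e <= N} lcoef theta e * X^e, where lcoef e is the
   coefficient of X^e and the support is bounded above by lbnd. *)
Record laurent (F : nzRingType) := Laurent {
  lcoef : int -> F ;
  lbnd : int ;
  lbndP : forall e : int, lbnd < e -> lcoef e = 0 }.

Section Laurent.
Variable F : nzRingType.

Definition leqser (x y : laurent F) : Prop := forall e, lcoef x e = lcoef y e.

Definition lzero (x : laurent F) : Prop := forall e, lcoef x e = 0.

Definition pcoef (P : {poly F}) (e : int) : F :=
  match e with Posz n => P`_n | Negz _ => 0 end.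

Lemma pcoefP (P : {poly F}) e : (size P)%:Z < e -> pcoef P e = 0.
Proof.
case: e => [n|n] //= H; apply: nth_default.
by rewrite ltz_nat in H; exact: ltnW.
Qed.

Definition lpoly (P : {poly F}) : laurent F := Laurent (@pcoefP P).

Definition lone : laurent F := lpoly 1.

Lemma laddP (x y : laurent F) e :
  Num.max (lbnd x) (lbnd y) < e -> lcoef x e + lcoef y e = 0.
Proof.
rewrite gt_max => /andP[hx hy].
by rewrite (lbndP hx) (lbndP hy) addr0.
Qed.

Definition ladd (x y : laurent F) : laurent F := Laurent (@laddP x y).

(* product: coefficient of X^e is the (finite) sum of x_a y_b over a + b = e *)
Definition mulcoef (x y : laurent F) (e : int) : F :=
  \sum_(k < (absz (lbnd x + lbnd y - e)%R).+1)
     lcoef x (lbnd x - k%:Z) * lcoef y (e - lbnd x + k%:Z).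

Lemma lmulP (x y : laurent F) e : lbnd x + lbnd y < e -> mulcoef x y e = 0.
Proof.
move=> H; rewrite /mulcoef big1 // => k _.
rewrite (@lbndP _ y) ?mulr0 //.
have h0 : (0 : int) <= k%:Z by [].
have : lbnd y < e - lbnd x by rewrite ltrBrDr addrC.
move=> h; apply: (lt_le_trans h); by rewrite lerDl.
Qed.

Definition lmul (x y : laurent F) : laurent F := Laurent (@lmulP x y).

Definition fraccoef (x : laurent F) (e : int) : F := if e < 0 then lcoef x e else 0.

Lemma lfracP (x : laurent F) e : lbnd x < e -> fraccoef x e = 0.
Proof. by move=> H; rewrite /fraccoef (lbndP H); case: ifP. Qed.

Definition lfrac (x : laurent F) : laurent F := Laurent (@lfracP x).

Definition is_deg (x : laurent F) (d : int) : Prop :=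
  lcoef x d <> 0 /\ forall e, d < e -> lcoef x e = 0.

Definition labs (R : realType) (x : laurent F) : R :=
  match pselect (exists d, is_deg x d) with
  | left H => (2%:R : R) ^ (projT1 (cid H))
  | right _ => 0
  end.

Definition lnorm (R : realType) (x : laurent F) : R := labs R (lfrac x).

Definition is_irrational_ser (x : laurent F) : Prop :=
  ~ exists (P Q : {poly F}), Q != 0 /\ leqser (lmul (lpoly Q) x) (lpoly P).

(* A (indexed from 1: A 1, A 2, ...) is the (infinite) sequence of partial
   quotients of the simple continued fraction eta = [A_1, A_2, ...]:
   eta_0 = eta, and for every j, eta_j <> 0, eta_{j+1} = <eta_{j+1}> and
   1 / eta_j = A_{j+1} + eta_{j+1}, i.e. A_{j+1} is the polynomial part and
   eta_{j+1} the fractional part of 1/eta_j. *)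
Definition cf_expansion (eta : laurent F) (A : nat -> {poly F}) : Prop :=
  exists es : nat -> laurent F,
    leqser (es 0%N) eta /\
    forall j : nat,
      ~ lzero (es j) /\
      leqser (lfrac (es j.+1)) (es j.+1) /\
      leqser (lmul (es j) (ladd (lpoly (A j.+1)) (es j.+1))) lone.

Definition deficiency_le (x : laurent F) (D : nat) : Prop :=
  forall (r : nat) (A : nat -> {poly F}),
    cf_expansion (lfrac (lmul (lpoly 'X^r) x)) A ->
    forall j : nat, (0 < j)%N -> ((size (A j)).-1 <= D.+1)%N.

End Laurent.
Arguments labs {F} R x.
Arguments lnorm {F} R x.

(* Main.v *)
Require Import Defs.
From HB Require Import structures.
From mathcomp Require Import all_boot all_order all_algebra.
From mathcomp Require Import boolp reals.
Import Order.TTheory GRing.Theory Num.Theory.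
Local Open Scope ring_scope.
From mathcomp Require Import zify.
From Stdlib Require Import Ring.
Unset Strict Implicit. Unset Printing Implicit Defensive.
Set Implicit Arguments.
Section Win.
Variable F : fieldType.
Implicit Types (f : int -> F).

Lemma wsum_ext f (h : int) (n : nat) :
  (forall a, f a != 0 -> h - n%:Z <= a <= h) ->
  forall d m : nat, \sum_(k < (n + d + m).+1) f (h + d%:Z - k%:Z) = \sum_(k < n.+1) f (h - k%:Z).
Proof.
move=> Hs; elim=> [|d IH] m.
  elim: m => [|m IHm]; first by rewrite !addn0; apply: eq_bigr => k _; rewrite addr0.
  rewrite addnS big_ord_recr /= IHm.
  have -> : f (h + 0%:Z - (n + 0 + m).+1%:Z) = 0.
    apply/eqP; apply: contraT => /Hs /andP[H1 _]; lia.
  by rewrite addr0.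
rewrite addnS addSn big_ord_recl /=.
have -> : f (h + d.+1%:Z - 0%:Z) = 0.
  apply/eqP; apply: contraT => /Hs /andP[_ H1]; lia.
rewrite add0r -(IH m); apply: eq_bigr => k _; congr f; rewrite /bump /=; lia.
Qed.

Lemma wsum_big f (h : int) (n : nat) (H : int) (N : nat) :
  (forall a, f a != 0 -> h - n%:Z <= a <= h) -> h <= H -> H - N%:Z <= h - n%:Z ->
  \sum_(k < N.+1) f (H - k%:Z) = \sum_(k < n.+1) f (h - k%:Z).
Proof.
move=> Hs hH hL.
have [d Hd] : exists d : nat, H = h + d%:Z by exists (absz (H - h)%R); lia.
have [m Hm] : exists m : nat, N = (n + d + m)%N by exists (absz (N%:Z - n%:Z - d%:Z)%R); lia.
by rewrite Hm Hd; apply: wsum_ext.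
Qed.

Lemma wsum f (h : int) (n : nat) (h' : int) (n' : nat) :
  (forall a, f a != 0 -> (h - n%:Z <= a <= h) && (h' - n'%:Z <= a <= h')) ->
  \sum_(k < n.+1) f (h - k%:Z) = \sum_(k < n'.+1) f (h' - k%:Z).
Proof.
move=> Hs.
pose H := Num.max h h'. pose N := absz (H - Num.min (h - n%:Z) (h' - n'%:Z))%R.
rewrite -(@wsum_big f h n H N); last 3 first.
- by move=> a /Hs /andP[].
- by rewrite le_max lexx.
- rewrite /N /H; lia.
rewrite (@wsum_big f h' n' H N) //.
- by move=> a /Hs /andP[].
- by rewrite le_max lexx orbT.
- rewrite /N /H; lia.
Qed.
End Win.

Set Implicit Arguments.
Section Ser.
Variable F : fieldType.
Implicit Types x y z : laurent F.

Definition vanish x (B : int) := forall e, B < e -> lcoef x e = 0.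
Lemma vanish_lbnd x : vanish x (lbnd x).
Proof. exact: lbndP. Qed.
Arguments vanish_lbnd : clear implicits.
Lemma vanish_le x B B' : vanish x B -> B <= B' -> vanish x B'.
Proof. by move=> H hB e he; apply: H; exact: le_lt_trans hB he. Qed.

Lemma nz_le x B a : vanish x B -> lcoef x a != 0 -> a <= B.
Proof. by move=> h nz; rewrite leNgt; apply/negP => /h hz; rewrite hz eqxx in nz. Qed.

Lemma leqser_refl x : leqser x x. Proof. by []. Qed.
Lemma leqser_sym x y : leqser x y -> leqser y x. Proof. by move=> H e; rewrite H. Qed.
Lemma leqser_trans x y z : leqser x y -> leqser y z -> leqser x z.
Proof. by move=> H1 H2 e; rewrite H1 H2. Qed.
Lemma vanish_eq x y B : leqser x y -> vanish x B -> vanish y B.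
Proof. by move=> H hx e he; rewrite -H hx. Qed.

Definition TB (B : int) x (N : nat) : {poly F} := \poly_(j < N) lcoef x (B - j%:Z).
Lemma coef_TB B x N j : (TB B x N)`_j = if (j < N)%N then lcoef x (B - j%:Z) else 0.
Proof. by rewrite coef_poly. Qed.
Lemma TB_eq B x y N : leqser x y -> TB B x N = TB B y N.
Proof. by move=> H; apply/polyP=> j; rewrite !coef_TB H. Qed.

Lemma eq_TB x y B : vanish x B -> vanish y B -> (forall N, TB B x N = TB B y N) -> leqser x y.
Proof.
move=> hx hy H e; case: (ltP B e) => [lt|ge]; first by rewrite hx ?hy.
have := congr1 (fun p : {poly F} => p`_(absz (B - e)%R)) (H (absz (B - e)%R).+1).
rewrite /= !coef_TB ltnSn.
have -> : B - (absz (B - e)%R)%:Z = e by lia.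
done.
Qed.

Lemma take_mull N (p q : {poly F}) : take_poly N (take_poly N p * q) = take_poly N (p * q).
Proof.
apply/polyP => i; rewrite !coef_take_poly; case: ifP => // hi.
rewrite !coefM; apply: eq_bigr => j _; rewrite coef_take_poly.
by rewrite (leq_ltn_trans _ hi) // -ltnS.
Qed.
Lemma take_mulr N (p q : {poly F}) : take_poly N (p * take_poly N q) = take_poly N (p * q).
Proof. by rewrite mulrC take_mull mulrC. Qed.
Lemma take_take N (p : {poly F}) : take_poly N (take_poly N p) = take_poly N p.
Proof. by rewrite take_poly_id // size_take_poly. Qed.
Lemma take_TB B x N : take_poly N (TB B x N) = TB B x N.
Proof. by rewrite take_poly_id // /TB size_poly. Qed.

Lemma lmul_coef x y Bx By (i : nat) : vanish x Bx -> vanish y By ->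
  lcoef (lmul x y) (Bx + By - i%:Z) =
  \sum_(j < i.+1) lcoef x (Bx - j%:Z) * lcoef y (Bx + By - i%:Z - (Bx - j%:Z)).
Proof.
move=> hx hy; set e := Bx + By - i%:Z; rewrite /= /mulcoef.
have hxl := @lbndP _ x; have hyl := @lbndP _ y; rewrite /vanish in hx hy.
case: (ltP (lbnd x + lbnd y) e) => [lt|ge].
  rewrite big1 => [|k _]; last first.
    have [->|nz] := eqVneq (lcoef x (lbnd x - k%:Z)) 0; first by rewrite mul0r.
    rewrite (hyl) ?mulr0 //.
    have := nz_le (@lbndP _ x) nz; lia.
  rewrite big1 // => j _.
  have [->|nz] := eqVneq (lcoef x (Bx - j%:Z)) 0; first by rewrite mul0r.
  have := nz_le (@lbndP _ x) nz.
  move=> h1; rewrite hyl ?mulr0 //; lia.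
pose f := fun a => lcoef x a * lcoef y (e - a).
transitivity (\sum_(k < (absz (lbnd x + lbnd y - e)%R).+1) f (lbnd x - k%:Z)).
  by apply: eq_bigr => k _; rewrite /f; congr (_ * lcoef y _); lia.
apply: wsum => a; rewrite /f => nz.
have nx : lcoef x a != 0 by apply: contra nz => /eqP ->; rewrite mul0r.
have ny : lcoef y (e - a) != 0 by apply: contra nz => /eqP ->; rewrite mulr0.
have h1 := nz_le (@lbndP _ x) nx.
have h2 := nz_le hx nx.
have h3 := nz_le (@lbndP _ y) ny.
have h4 := nz_le hy ny.
rewrite /e in h3 h4 ge *; lia.
Qed.

Lemma lmul_vanish x y Bx By : vanish x Bx -> vanish y By -> vanish (lmul x y) (Bx + By).
Proof.
move=> hx hy e he.
have hxl := @lbndP _ x; have hyl := @lbndP _ y; rewrite /vanish in hx hy.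
rewrite /= /mulcoef big1 // => k _.
have [->|nz] := eqVneq (lcoef x (lbnd x - k%:Z)) 0; first by rewrite mul0r.
have h1 := nz_le hx nz.
rewrite hy ?mulr0 //; lia.
Qed.

Lemma TB_mul x y Bx By N : vanish x Bx -> vanish y By ->
  TB (Bx + By) (lmul x y) N = take_poly N (TB Bx x N * TB By y N).
Proof.
move=> hx hy; apply/polyP => i; rewrite coef_TB coef_take_poly.
case: ifP => // hi; rewrite (lmul_coef _ hx hy) coefM.
apply: eq_bigr => j _; rewrite !coef_TB (leq_ltn_trans _ hi) ?leq_ord //.
rewrite (leq_ltn_trans _ hi) ?leq_subr //; congr (_ * lcoef y _).
have := ltn_ord j; lia.
Qed.

Lemma lmul_eq x x' y y' : leqser x x' -> leqser y y' -> leqser (lmul x y) (lmul x' y').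
Proof.
move=> hx hy.
have vx' := vanish_eq hx (vanish_lbnd x); have vy' := vanish_eq hy (vanish_lbnd y).
apply: (@eq_TB _ _ (lbnd x + lbnd y)).
- exact: lmul_vanish (vanish_lbnd _) (vanish_lbnd _).
- exact: lmul_vanish.
move=> N; rewrite (TB_mul N (vanish_lbnd x) (vanish_lbnd y)) (TB_mul N vx' vy').
by rewrite (TB_eq _ _ hx) (TB_eq _ _ hy).
Qed.

Lemma lmul_comm x y : leqser (lmul x y) (lmul y x).
Proof.
apply: (@eq_TB _ _ (lbnd x + lbnd y)).
- exact: lmul_vanish (vanish_lbnd _) (vanish_lbnd _).
- by have := lmul_vanish (vanish_lbnd y) (vanish_lbnd x); rewrite addrC.
move=> N; rewrite (TB_mul N (vanish_lbnd x) (vanish_lbnd y)) addrC.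
by rewrite (TB_mul N (vanish_lbnd y) (vanish_lbnd x)) mulrC.
Qed.

Lemma lmul_assoc x y z : leqser (lmul (lmul x y) z) (lmul x (lmul y z)).
Proof.
have vx := vanish_lbnd x; have vy := vanish_lbnd y; have vz := vanish_lbnd z.
have vxy := lmul_vanish vx vy; have vyz := lmul_vanish vy vz.
apply: (@eq_TB _ _ (lbnd x + lbnd y + lbnd z)).
- exact: lmul_vanish.
- rewrite -addrA; exact: lmul_vanish.
move=> N; rewrite (TB_mul N vxy vz) (TB_mul N vx vy) -addrA (TB_mul N vx vyz) (TB_mul N vy vz).
by rewrite take_mull take_mulr mulrA.
Qed.

Lemma TB_add B x y N : TB B (ladd x y) N = TB B x N + TB B y N.
Proof. by apply/polyP => j; rewrite coefD !coef_TB; case: ifP; rewrite ?addr0. Qed.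

Lemma ladd_vanish x y B : vanish x B -> vanish y B -> vanish (ladd x y) B.
Proof. by move=> hx hy e he /=; rewrite hx ?hy ?addr0. Qed.

Lemma ladd_eq x x' y y' : leqser x x' -> leqser y y' -> leqser (ladd x y) (ladd x' y').
Proof. by move=> hx hy e /=; rewrite hx hy. Qed.
Lemma ladd_comm x y : leqser (ladd x y) (ladd y x).
Proof. by move=> e /=; rewrite addrC. Qed.
Lemma ladd_assoc x y z : leqser (ladd (ladd x y) z) (ladd x (ladd y z)).
Proof. by move=> e /=; rewrite addrA. Qed.

Lemma lmul_addr x y z : leqser (lmul x (ladd y z)) (ladd (lmul x y) (lmul x z)).
Proof.
pose M := Num.max (lbnd y) (lbnd z).
have vx := vanish_lbnd x.
have vy : vanish y M by apply: vanish_le (vanish_lbnd _) _; rewrite le_max lexx.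
have vz : vanish z M by apply: vanish_le (vanish_lbnd _) _; rewrite le_max lexx orbT.
have vyz : vanish (ladd y z) M by exact: ladd_vanish.
apply: (@eq_TB _ _ (lbnd x + M)).
- exact: lmul_vanish.
- by apply: ladd_vanish; apply: lmul_vanish.
move=> N; rewrite TB_add (TB_mul N vx vyz) (TB_mul N vx vy) (TB_mul N vx vz) TB_add.
by rewrite mulrDr take_polyD.
Qed.

Lemma TB_one N : TB 0 (lone F) N = take_poly N 1.
Proof.
apply/polyP => j; rewrite coef_TB coef_take_poly; case: ifP => // _.
case: j => [|j] /=; first by rewrite coefC.
by rewrite coefC.
Qed.

Lemma lone_vanish : vanish (lone F) 0.
Proof. by case=> [[|n]|n] //= _; rewrite coefC. Qed.

Lemma lmul1 x : leqser (lmul (lone F) x) x.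
Proof.
have vx := vanish_lbnd x.
apply: (@eq_TB _ _ (0 + lbnd x)).
- exact: lmul_vanish lone_vanish vx.
- by rewrite add0r.
move=> N; rewrite (TB_mul N lone_vanish vx) TB_one take_mull mul1r add0r take_TB //.
Qed.

Definition lzer : laurent F := lpoly 0.
Lemma lzerE e : lcoef lzer e = 0.
Proof. by case: e => [n|n] //=; rewrite coef0. Qed.

Lemma loppP x e : lbnd x < e -> - lcoef x e = 0.
Proof. by move=> /lbndP ->; rewrite oppr0. Qed.
Definition lopp x : laurent F := Laurent (@loppP x).

Lemma lopp_eq x x' : leqser x x' -> leqser (lopp x) (lopp x').
Proof. by move=> h e /=; rewrite h. Qed.
Lemma laddN x : leqser (ladd x (lopp x)) lzer.
Proof. by move=> e; rewrite lzerE /= subrr. Qed.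
Lemma ladd0 x : leqser (ladd lzer x) x.
Proof. by move=> e; have := lzerE e; rewrite /= => ->; rewrite add0r. Qed.

End Ser.
Arguments vanish_lbnd {F} x.

Set Implicit Arguments.
Section LT.
Variable F : fieldType.
Implicit Types x y z : laurent F.
Implicit Types P Q : {poly F}.

Lemma pcoef_nz (P : {poly F}) a : pcoef P a != 0 -> (0 <= a) && (a < (size P)%:Z).
Proof.
case: a => [k|k] //=; last by rewrite eqxx.
move=> nz; rewrite ltz_nat; apply: contraNT nz; rewrite -leqNgt => h.
by rewrite nth_default.
Qed.

Lemma lpoly_add P Q : leqser (lpoly (P + Q)) (ladd (lpoly P) (lpoly Q)).
Proof. by case=> [n|n] /=; rewrite ?coefD ?addr0. Qed.
Lemma lpoly_opp P : leqser (lpoly (- P)) (lopp (lpoly P)).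
Proof. by case=> [n|n] /=; rewrite ?coefN ?oppr0. Qed.
Lemma lpoly_one : leqser (lpoly 1) (lone F).
Proof. by []. Qed.

Lemma lpoly_mul P Q : leqser (lpoly (P * Q)) (lmul (lpoly P) (lpoly Q)).
Proof.
have vP := vanish_lbnd (lpoly P); have vQ := vanish_lbnd (lpoly Q).
move=> e.
case: (ltP ((size P)%:Z + (size Q)%:Z) e) => [lt|ge].
  rewrite (lmul_vanish vP vQ) //.
  case: e lt => [n|n] lt; last by []. rewrite /= nth_default //.
  rewrite (leq_trans (size_polyMleq _ _)) // -subn1; lia.
pose i := absz ((size P)%:Z + (size Q)%:Z - e)%R.
have -> : e = (size P)%:Z + (size Q)%:Z - i%:Z by rewrite /i; lia.
rewrite (lmul_coef _ vP vQ).
set e' := (size P)%:Z + (size Q)%:Z - i%:Z.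
have he : e' = e by rewrite /e' /i; lia.
have hi : i%:Z = (size P)%:Z + (size Q)%:Z - e by rewrite /i; lia.
rewrite he /=; clearbody i; clear e' he.
case: e hi ge => [n|n] hi ge /=; last first.
  rewrite big1 // => j _.
  have [->|nz] := eqVneq (pcoef P ((size P)%:Z - j%:Z)) 0; first by rewrite mul0r.
  have /andP[h1 h2] := pcoef_nz nz.
  have [->|nz2] := eqVneq (pcoef Q (Negz n - ((size P)%:Z - j%:Z))) 0; first by rewrite mulr0.
  have /andP[h3 h4] := pcoef_nz nz2; lia.
pose f := fun a => pcoef P a * pcoef Q (n%:Z - a).
transitivity (\sum_(j < n.+1) f (n%:Z - j%:Z)).
  rewrite coefMr; apply: eq_bigr => j _; rewrite /f.
  have hj := ltn_ord j.
  have -> : n%:Z - j%:Z = (n - j)%N%:Z by lia.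
  have -> : n%:Z - (n - j)%N%:Z = j%:Z by lia.
  by [].
apply: wsum => a; rewrite /f => nz.
have nx : pcoef P a != 0 by apply: contra nz => /eqP ->; rewrite mul0r.
have ny : pcoef Q (n%:Z - a) != 0 by apply: contra nz => /eqP ->; rewrite mulr0.
have /andP[h1 h2] := pcoef_nz nx; have /andP[h3 h4] := pcoef_nz ny.
have : a <= n%:Z by lia. have : n%:Z - (size Q)%:Z < a by lia. have : (size P)%:Z - i%:Z <= a by lia. have : n%:Z - n%:Z <= a by lia. move=> h8 h7 _ h5; rewrite h8 h7 h5 (ltW h2). done.
Qed.

(* the Leibniz-equality type *)
Definition Lt := {f : int -> F | exists B, forall e, B < e -> f e = 0}.
Definition toL x : Lt := exist _ (lcoef x) (ex_intro _ (lbnd x) (@lbndP _ x)).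
Definition ofL (a : Lt) : laurent F :=
  let c := cid (proj2_sig a) in @Laurent F (proj1_sig a) (projT1 c) (projT2 c).

Lemma Lt_eq (a b : Lt) : (forall e, proj1_sig a e = proj1_sig b e) -> a = b.
Proof.
case: a b => f hf [g hg] /= H.
have E : f = g by apply: funext.
subst g; congr exist; exact: Prop_irrelevance.
Qed.

Lemma toL_eq x y : leqser x y -> toL x = toL y.
Proof. by move=> H; apply: Lt_eq. Qed.
Lemma toL_inj x y : toL x = toL y -> leqser x y.
Proof. by move=> H e; have := congr1 (fun a : Lt => proj1_sig a e) H. Qed.
Lemma toLK a : toL (ofL a) = a.
Proof. by apply: Lt_eq. Qed.
Lemma ofLK x : leqser (ofL (toL x)) x.
Proof. by []. Qed.

Definition Ladd a b := toL (ladd (ofL a) (ofL b)).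
Definition Lmul a b := toL (lmul (ofL a) (ofL b)).
Definition Lopp a := toL (lopp (ofL a)).
Definition Lsub a b := Ladd a (Lopp b).
Definition L0 := toL (lzer F).
Definition L1 := toL (lone F).

Lemma toL_add x y : toL (ladd x y) = Ladd (toL x) (toL y).
Proof. by apply: toL_eq; apply: ladd_eq; apply: leqser_sym; apply: ofLK. Qed.
Lemma toL_mul x y : toL (lmul x y) = Lmul (toL x) (toL y).
Proof. by apply: toL_eq; apply: lmul_eq; apply: leqser_sym; apply: ofLK. Qed.
Lemma toL_opp x : toL (lopp x) = Lopp (toL x).
Proof. by apply: toL_eq; apply: lopp_eq; apply: leqser_sym; apply: ofLK. Qed.

Lemma Lring : ring_theory L0 L1 Ladd Lmul Lsub Lopp (@eq Lt).
Proof.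
split.
- by move=> a; rewrite -[a]toLK /L0 -toL_add; apply: toL_eq; apply: ladd0.
- by move=> a b; rewrite -[a]toLK -[b]toLK -!toL_add; apply: toL_eq; apply: ladd_comm.
- move=> a b c; rewrite -[a]toLK -[b]toLK -[c]toLK -!toL_add; apply: toL_eq.
  by apply: leqser_sym; apply: ladd_assoc.
- by move=> a; rewrite -[a]toLK /L1 -toL_mul; apply: toL_eq; apply: lmul1.
- by move=> a b; rewrite -[a]toLK -[b]toLK -!toL_mul; apply: toL_eq; apply: lmul_comm.
- move=> a b c; rewrite -[a]toLK -[b]toLK -[c]toLK -!toL_mul; apply: toL_eq.
  by apply: leqser_sym; apply: lmul_assoc.
- move=> a b c; rewrite -[a]toLK -[b]toLK -[c]toLK -!toL_add -!toL_mul.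
  apply: toL_eq; apply: leqser_trans (lmul_comm _ _) _.
  apply: leqser_trans (lmul_addr _ _ _) _.
  by apply: ladd_eq; apply: leqser_trans (lmul_comm _ _) _; apply: lmul_eq => e.
- by [].
- by move=> a; rewrite -[a]toLK -toL_opp -toL_add; apply: toL_eq; apply: laddN.
Qed.

Add Ring Lring : Lring.

Lemma test (a b c : Lt) : Lmul (Ladd a b) c = Ladd (Lmul c a) (Lmul b c).
Proof. ring. Qed.

End LT.

Set Implicit Arguments.
Section Deg.
Variable F : fieldType.
Implicit Types x y z : laurent F.
Implicit Types P Q : {poly F}.

Lemma is_deg_eq x y d : leqser x y -> is_deg x d -> is_deg y d.
Proof. by move=> H [h1 h2]; split; [rewrite -H | move=> e he; rewrite -H h2]. Qed.

Lemma is_deg_uniq x d d' : is_deg x d -> is_deg x d' -> d = d'.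
Proof.
move=> [h1 h2] [h1' h2']; case: (ltgtP d d') => // lt.
- by have := h2 _ lt.
- by have := h2' _ lt.
Qed.

Lemma is_deg_vanish x d : is_deg x d -> vanish x d.
Proof. by case. Qed.

Lemma lzero_eq x y : leqser x y -> lzero x -> lzero y.
Proof. by move=> H h e; rewrite -H. Qed.

Lemma is_deg_nz x d : is_deg x d -> ~ lzero x.
Proof. by move=> [h1 _] h; apply: h1. Qed.

Lemma deg_exists x : ~ lzero x -> exists d, is_deg x d.
Proof.
move=> nz.
have [e he] : exists e, lcoef x e != 0.
  apply: contrapT => H; apply: nz => e; apply/eqP; apply: contrapT => H'.
  by apply: H; exists e; apply/negP.
have hl := nz_le (vanish_lbnd x) he.
have ex : exists n, lcoef x (lbnd x - n%:Z) != 0.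
  by exists (absz (lbnd x - e)%R); have -> : lbnd x - (absz (lbnd x - e)%R)%:Z = e by lia.
case: (ex_minnP ex) => m hm hmin.
exists (lbnd x - m%:Z); split; first exact/eqP.
move=> e' he'.
case: (ltP (lbnd x) e') => [lt|ge]; first exact: lbndP.
apply/eqP; apply: contraT => nz'.
have := hmin (absz (lbnd x - e')%R).
have -> : lbnd x - (absz (lbnd x - e')%R)%:Z = e' by lia.
move=> /(_ nz'); lia.
Qed.

Lemma labs_deg (R : realType) x d : is_deg x d -> labs R x = 2%:R ^ d.
Proof.
move=> hd; rewrite /labs; case: pselect => [H|H]; last by exfalso; apply: H; exists d.
by case: cid => d' hd' /=; rewrite (is_deg_uniq hd' hd).
Qed.

Lemma labs_zero (R : realType) x : lzero x -> labs R x = 0.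
Proof.
move=> hz; rewrite /labs; case: pselect => [H|//].
by exfalso; case: H => d hd; exact: is_deg_nz hd hz.
Qed.

Lemma labs_eq (R : realType) x y : leqser x y -> labs R x = labs R y.
Proof.
move=> H; case: (pselect (lzero x)) => [hz|hnz].
  by rewrite !labs_zero //; apply: lzero_eq hz.
case: (deg_exists hnz) => d hd.
by rewrite (labs_deg _ hd) (labs_deg _ (is_deg_eq H hd)).
Qed.

Lemma deg_mul x y a b : is_deg x a -> is_deg y b -> is_deg (lmul x y) (a + b).
Proof.
move=> hx hy; split; last exact: lmul_vanish (is_deg_vanish hx) (is_deg_vanish hy).
have := congr1 (fun p : {poly F} => p`_0) (TB_mul 1 (is_deg_vanish hx) (is_deg_vanish hy)).
rewrite /= coef_TB coef_take_poly /= coef0M !coef_TB /= !subr0 => ->.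
by apply/eqP; rewrite mulf_neq0 //; apply/eqP; [case: hx | case: hy].
Qed.

Lemma deg_opp x a : is_deg x a -> is_deg (lopp x) a.
Proof.
move=> [h1 h2]; split => /= [|e he]; last by rewrite h2 ?oppr0.
by move/eqP; rewrite oppr_eq0; apply/negP; apply/eqP.
Qed.

Lemma deg_add_lt x y a B : is_deg x a -> vanish y B -> B < a -> is_deg (ladd x y) a.
Proof.
move=> [h1 h2] hy hB; split => /= [|e he]; first by rewrite hy ?addr0.
by rewrite h2 ?hy ?addr0 //; apply: lt_trans he.
Qed.

Lemma deg_lpoly P : P != 0 -> is_deg (lpoly P) (size P).-1%:Z.
Proof.
move=> nz; split; last move=> e he.
  by rewrite /= -lead_coefE; apply/eqP; rewrite lead_coef_eq0.
apply/eqP; apply: contraT => /pcoef_nz /andP[h1 h2].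
have : (0 < size P)%N by rewrite size_poly_gt0.
move: he; rewrite -subn1; lia.
Qed.

Lemma lpoly_zero P : lzero (lpoly P) -> P = 0.
Proof. by move=> H; apply/polyP => n; rewrite coef0; exact: (H n). Qed.

Lemma lmul_zero x y : lzero x -> lzero (lmul x y).
Proof. by move=> H e /=; rewrite /mulcoef big1 // => k _; rewrite H mul0r. Qed.

Definition ppart x : {poly F} := \poly_(n < (absz (lbnd x)).+1) lcoef x n%:Z.

Lemma ppart_frac x : leqser x (ladd (lpoly (ppart x)) (lfrac x)).
Proof.
case=> [n|n] /=; rewrite /fraccoef /=; last by rewrite add0r.
rewrite addr0 coef_poly; case: ifP => // h.
by rewrite lbndP //; lia.
Qed.

Lemma lfrac_vanish x : vanish (lfrac x) (-1).
Proof. by move=> e he /=; rewrite /fraccoef ifF //; lia. Qed.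

Lemma lfrac_id x : vanish x (-1) -> leqser (lfrac x) x.
Proof.
move=> H e /=; rewrite /fraccoef; case: ifP => // h.
by rewrite H //; lia.
Qed.

Lemma lfrac_eq x y : leqser x y -> leqser (lfrac x) (lfrac y).
Proof. by move=> H e /=; rewrite /fraccoef H. Qed.

Lemma lfrac_addp P x : leqser (lfrac (ladd (lpoly P) x)) (lfrac x).
Proof. by case=> [n|n] //=; rewrite /fraccoef /= add0r. Qed.

Lemma lfrac_add x y : leqser (lfrac (ladd x y)) (ladd (lfrac x) (lfrac y)).
Proof. by move=> e /=; rewrite /fraccoef; case: ifP; rewrite ?addr0. Qed.

Lemma lfrac_opp x : leqser (lfrac (lopp x)) (lopp (lfrac x)).
Proof. by move=> e /=; rewrite /fraccoef; case: ifP; rewrite ?oppr0. Qed.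

Lemma lfrac_lpoly P : lzero (lfrac (lpoly P)).
Proof. by case=> [n|n]. Qed.

End Deg.

Set Implicit Arguments.
Section Core.
Variable F : fieldType.
Implicit Types x y z : laurent F.
Implicit Types P Q : {poly F}.

Add Ring Lring : (@Lring F).

Definition Lp P := toL (lpoly P).
Lemma Lp_add P Q : Lp (P + Q) = Ladd (Lp P) (Lp Q).
Proof. by rewrite /Lp -toL_add; apply: toL_eq; apply: lpoly_add. Qed.
Lemma Lp_mul P Q : Lp (P * Q) = Lmul (Lp P) (Lp Q).
Proof. by rewrite /Lp -toL_mul; apply: toL_eq; apply: lpoly_mul. Qed.
Lemma Lp_opp P : Lp (- P) = Lopp (Lp P).
Proof. by rewrite /Lp -toL_opp; apply: toL_eq; apply: lpoly_opp. Qed.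

Lemma ident_desc (e e1 eps : laurent F) Q P A :
  leqser (lmul e (ladd (lpoly A) e1)) (lone F) ->
  leqser (lmul (lpoly Q) e) (ladd (lpoly P) eps) ->
  leqser (lmul (lpoly P) e1) (ladd (lpoly (Q - P * A)) (lopp (lmul eps (ladd (lpoly A) e1)))).
Proof.
move=> /toL_eq H1 /toL_eq H2; apply: toL_inj.
move: H1 H2; rewrite !(toL_mul, toL_add, toL_opp) -/(Lp _) -/(Lp _) -/(Lp _).
rewrite -/(Lp _) Lp_add Lp_opp Lp_mul -/(L1 F).
move: (Lp Q) (Lp P) (Lp A) (toL e) (toL e1) (toL eps) => q p a e' e1' eps' H1 H2.
have Hp : p = Lsub (Lmul q e') eps' by rewrite H2; ring.
rewrite Hp.
transitivity (Ladd (Lsub q (Lmul (Lmul q e') a)) (Lopp (Lmul eps' e1'))); last by ring.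
transitivity (Ladd (Lsub (Lmul q (Lmul e' (Ladd a e1'))) (Lmul (Lmul q e') a)) (Lopp (Lmul eps' e1'))); first by ring.
rewrite H1; ring.
Qed.


Lemma ident_lift (e e1 eps : laurent F) Q P A :
  leqser (lmul e (ladd (lpoly A) e1)) (lone F) ->
  leqser (lmul (lpoly Q) e1) (ladd (lpoly P) eps) ->
  leqser (lmul (lpoly (Q * A + P)) e) (ladd (lpoly Q) (lopp (lmul eps e))).
Proof.
move=> /toL_eq H1 /toL_eq H2; apply: toL_inj.
move: H1 H2; rewrite !(toL_mul, toL_add, toL_opp) -/(Lp _) -/(Lp _) -/(Lp _).
rewrite -/(Lp _) Lp_add Lp_mul -/(L1 F).
move: (Lp Q) (Lp P) (Lp A) (toL e) (toL e1) (toL eps) => q p a e' e1' eps' H1 H2.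
have Hp : p = Lsub (Lmul q e1') eps' by rewrite H2; ring.
rewrite Hp.
transitivity (Lsub (Lmul q (Lmul e' (Ladd a e1'))) (Lmul eps' e')); first by ring.
rewrite H1; ring.
Qed.

Lemma ident_rat (e e1 : laurent F) Q P A :
  leqser (lmul e (ladd (lpoly A) e1)) (lone F) ->
  leqser (lmul (lpoly Q) e1) (lpoly P) ->
  leqser (lmul (lpoly (A * Q + P)) e) (lpoly Q).
Proof.
move=> /toL_eq H1 /toL_eq H2; apply: toL_inj.
move: H1 H2; rewrite !(toL_mul, toL_add, toL_opp) -/(Lp _) -/(Lp _) -/(Lp _).
rewrite -/(Lp _) Lp_add Lp_mul -/(L1 F).
move: (Lp Q) (Lp P) (Lp A) (toL e) (toL e1) => q p a e' e1' H1 H2.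
rewrite -H2.
transitivity (Lmul q (Lmul e' (Ladd a e1'))); first by ring.
rewrite H1; ring.
Qed.

End Core.

Unset Implicit Arguments.
Section CF.
Variable F : fieldType.
Implicit Types x y z : laurent F.
Implicit Types P Q : {poly F}.

Variable es : nat -> laurent F.
Variable A : nat -> {poly F}.
Hypothesis Hnz : forall j, ~ lzero (es j).
Hypothesis Hfr : forall j, vanish (es j) (-1).
Hypothesis Hrel : forall j, leqser (lmul (es j) (ladd (lpoly (A j.+1)) (es j.+1))) (lone F).

Lemma deg_es j : exists d, is_deg (es j) d /\ d <= -1.
Proof.
have [d hd] := deg_exists (Hnz j); exists d; split => //.
by apply: nz_le (Hfr j) _; case: hd => /eqP.
Qed.

Lemma lone_deg : is_deg (lone F) 0.
Proof. by have := deg_lpoly (oner_neq0 {poly F}); rewrite size_poly1. Qed.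

Lemma degA k : [/\ A k.+1 != 0, is_deg (es k) (- ((size (A k.+1)).-1)%:Z),
   is_deg (ladd (lpoly (A k.+1)) (es k.+1)) ((size (A k.+1)).-1)%:Z
   & (0 < (size (A k.+1)).-1)%N].
Proof.
have [d [hd hd1]] := deg_es k; have [d' [hd' hd1']] := deg_es k.+1.
have [A0|Anz] := eqVneq (A k.+1) 0.
  have h : is_deg (lmul (es k) (ladd (lpoly (A k.+1)) (es k.+1))) (d + d').
    apply: deg_mul hd _; apply: is_deg_eq hd'; rewrite A0.
    by apply: leqser_sym; apply: ladd0.
  have := is_deg_uniq (is_deg_eq (Hrel k) h) lone_deg; lia.
have ha : is_deg (ladd (lpoly (A k.+1)) (es k.+1)) ((size (A k.+1)).-1)%:Z.
  apply: deg_add_lt (deg_lpoly Anz) (Hfr _) _; lia.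
have := is_deg_uniq (is_deg_eq (Hrel k) (deg_mul hd ha)) lone_deg => E.
have -> : - ((size (A k.+1)).-1)%:Z = d by lia.
split => //; lia.
Qed.


Lemma lzero_lfrac_lopp x : lzero x -> lzero (lfrac (lopp x)).
Proof. by move=> H e; rewrite /= /fraccoef /=; case: ifP => // _; rewrite H oppr0. Qed.

Lemma descent (M : nat) : (forall j, (0 < j)%N -> ((size (A j)).-1 <= M)%N) ->
  forall n k Q, (size Q <= n)%N -> Q != 0 ->
  exists d, is_deg (lfrac (lmul (lpoly Q) (es k))) d /\ - (M%:Z) <= ((size Q).-1)%:Z + d.
Proof.
move=> HM; elim=> [|n IH] k Q hs hQ.
  by move: hs; rewrite leqn0 size_poly_eq0 (negbTE hQ).
have [Anz hdk hda apos] := degA k.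
have hMa := HM k.+1 isT.
set a := (size (A k.+1)).-1 in hdk hda apos hMa.
set q := (size Q).-1.
set z := lmul (lpoly Q) (es k).
have hz : is_deg z (q%:Z + - a%:Z) := deg_mul (deg_lpoly hQ) hdk.
have hpf := ppart_frac z.
set P := ppart z in hpf; set eps := lfrac z in hpf *.
have [P0|Pnz] := eqVneq P 0.
  exists (q%:Z - a%:Z); split.
    apply: is_deg_eq hz; apply: leqser_trans hpf _; rewrite P0; exact: ladd0.
  lia.
set p := (size P).-1.
have hzp : is_deg z p%:Z.
  apply: is_deg_eq (leqser_sym hpf) _; apply: deg_add_lt (deg_lpoly Pnz) (lfrac_vanish _) _; lia.
have Epq := is_deg_uniq hz hzp.
have hsP : (size P <= n)%N.
  have : (0 < size P)%N by rewrite size_poly_gt0.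
  have : (0 < size Q)%N by rewrite size_poly_gt0.
  move: hs; rewrite /p /q in Epq *; lia.
have [d' [hd' hb']] := IH k.+1 P hsP Pnz.
have Hid := ident_desc (Hrel k) hpf.
set w := lmul eps (ladd (lpoly (A k.+1)) (es k.+1)) in Hid.
have hfr : leqser (lfrac (lmul (lpoly P) (es k.+1))) (lfrac (lopp w)).
  apply: leqser_trans (lfrac_eq Hid) _; exact: lfrac_addp.
case: (pselect (lzero eps)) => [e0|enz].
  exfalso; apply: (is_deg_nz (is_deg_eq hfr hd')).
  apply: lzero_lfrac_lopp; exact: lmul_zero.
have [de hde] := deg_exists enz.
have hw : is_deg (lopp w) (de + a%:Z) := deg_opp (deg_mul hde hda).
exists de; split => //.
case: (ltP (de + a%:Z) 0) => [neg|pos].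
  have hw' : is_deg (lfrac (lopp w)) (de + a%:Z).
    apply: (is_deg_eq _ hw); apply: leqser_sym; apply: lfrac_id.
    apply: vanish_le (is_deg_vanish hw) _; lia.
  have := is_deg_uniq (is_deg_eq hfr hd') hw'.
  move: hb'; rewrite /p /q in Epq *; lia.
move: Epq; rewrite /p /q; lia.
Qed.

Lemma lifting (j : nat) : forall k : nat, exists Q, Q != 0 /\ exists d,
  is_deg (lfrac (lmul (lpoly Q) (es k))) d /\ ((size Q).-1)%:Z + d = - ((size (A (k + j)%N.+1)).-1)%:Z.
Proof.
elim: j => [|j IH] k.
  exists 1; split; first exact: oner_neq0.
  have [_ hdk _ _] := degA k.
  exists (- ((size (A k.+1)).-1)%:Z); split; last by rewrite size_poly1 addn0 add0r.
  apply: is_deg_eq hdk; apply: leqser_sym.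
  apply: leqser_trans (lfrac_eq (lmul1 _)) _; exact: lfrac_id (Hfr k).
have [Q' [hQ' [d' [hd' hsum]]]] := IH k.+1.
have [Anz hdk hda apos] := degA k.
set a := (size (A k.+1)).-1 in hdk hda apos.
set z := lmul (lpoly Q') (es k.+1) in hd'.
have hpf := ppart_frac z.
set P := ppart z in hpf; set eps := lfrac z in hpf hd'.
have hd'neg : d' <= -1 by have [h1 _] := hd'; apply: (nz_le (lfrac_vanish z)); apply/eqP.
have Hid := ident_lift (Hrel k) hpf.
have hw : is_deg (lopp (lmul eps (es k))) (d' + - a%:Z) := deg_opp (deg_mul hd' hdk).
have hfr : is_deg (lfrac (lmul (lpoly (Q' * A k.+1 + P)) (es k))) (d' + - a%:Z).
  apply: (is_deg_eq _ hw); apply: leqser_sym.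
  apply: leqser_trans (lfrac_eq Hid) _; apply: leqser_trans (lfrac_addp _ _) _.
  apply: lfrac_id; apply: vanish_le (is_deg_vanish hw) _; lia.
have hsQA : size (Q' * A k.+1) = (size Q' + size (A k.+1)).-1 := size_mul hQ' Anz.
have hsP : (size P < size (Q' * A k.+1)%R)%N.
  have [P0|Pnz] := eqVneq P 0; first by rewrite P0 size_poly0 size_poly_gt0 mulf_neq0.
  have [_ hdk1 _ apos1] := degA k.+1.
  have hz : is_deg z (((size Q').-1)%:Z + - ((size (A k.+2)).-1)%:Z) := deg_mul (deg_lpoly hQ') hdk1.
  have hzp : is_deg z ((size P).-1)%:Z.
    apply: is_deg_eq (leqser_sym hpf) _; apply: deg_add_lt (deg_lpoly Pnz) (lfrac_vanish _) _; lia.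
  have E := is_deg_uniq hz hzp.
  have : (0 < size P)%N by rewrite size_poly_gt0.
  have : (0 < size Q')%N by rewrite size_poly_gt0.
  have : (0 < size (A k.+1))%N by rewrite size_poly_gt0.
  rewrite hsQA; lia.
have hsQ : size (Q' * A k.+1 + P) = size (Q' * A k.+1) := size_polyDl hsP.
exists (Q' * A k.+1 + P); split.
  by rewrite -size_poly_gt0 hsQ; apply: leq_ltn_trans hsP.
exists (d' + - a%:Z); split => //.
rewrite -addSnnS -hsum hsQ hsQA.
have : (0 < size Q')%N by rewrite size_poly_gt0.
have : (0 < size (A k.+1))%N by rewrite size_poly_gt0.
rewrite /a; lia.
Qed.

End CF.

Unset Implicit Arguments.
Section Inv.
Variable F : fieldType.
Implicit Types x y z : laurent F.
Implicit Types p q r : {poly F}.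

Lemma take_take2 m n p : (m <= n)%N -> take_poly m (take_poly n p) = take_poly m p.
Proof.
move=> h; apply/polyP => i; rewrite !coef_take_poly; case: ifP => // hi.
by rewrite (leq_trans hi h).
Qed.

Lemma TB_take B x m n : (m <= n)%N -> take_poly m (TB B x n) = TB B x m.
Proof.
move=> h; apply/polyP => i; rewrite coef_take_poly !coef_TB; case: ifP => // hi.
by rewrite (leq_trans hi h).
Qed.

Lemma trunc_inv p N : p`_0 != 0 -> exists q, take_poly N (p * q) = take_poly N 1.
Proof.
move=> nz; set c := p`_0.
set u := 1 - c^-1 *: p.
have u0 : u`_0 = 0 by rewrite /u coefB coefZ coef1 /= mulVf // subrr.
have ht : take_poly 1 u = 0.
  by apply/polyP => i; rewrite coef_take_poly coef0; case: i => [|i] //=; rewrite u0.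
have hu : u = drop_poly 1 u * 'X by rewrite -[LHS](poly_take_drop 1 u) ht add0r expr1.
exists (c^-1 *: \sum_(i < N) u ^+ i).
have Ep : p = c *: (1 - u) by rewrite /u opprB addrCA subrr addr0 scalerA divff // scale1r.
rewrite {1}Ep -scalerAr -scalerAl scalerA mulVf // scale1r.
rewrite -opprB mulNr -subrX1 opprB take_polyD linearN /= hu exprMn take_polyMXn_0.
by rewrite oppr0 addr0.
Qed.

Lemma trunc_uniq p r N : p`_0 != 0 -> take_poly N (p * r) = 0 -> take_poly N r = 0.
Proof.
move=> nz; elim: N => [|N IH] H; first by rewrite take_poly0l.
have H' : take_poly N (p * r) = 0 by rewrite -(take_take2 N N.+1 _ (leqnSn N)) H take_poly0r.
have {}IH := IH H'.
have rj : forall j, (j < N)%N -> r`_j = 0.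
  by move=> j hj; have := congr1 (fun s : {poly F} => s`_j) IH; rewrite /= coef_take_poly hj coef0.
have rN : r`_N = 0.
  have := congr1 (fun s : {poly F} => s`_N) H; rewrite /= coef_take_poly ltnSn coef0 coefMr.
  rewrite big_ord_recr /= big1 ?add0r ?subnn => [|j _]; last by rewrite rj ?mulr0.
  by move/eqP; rewrite mulf_eq0 (negbTE nz) /= => /eqP.
apply/polyP => j; rewrite coef_take_poly coef0; case: ifP => // hj.
by case: (ltngtP j N) => [/rj||->] //; rewrite ltnNge; move: hj; rewrite ltnS => ->.
Qed.


Lemma linv_exists x : ~ lzero x -> exists y, leqser (lmul x y) (lone F).
Proof.
move=> nz; have [d hd] := deg_exists nz.
have vx := is_deg_vanish hd.
have c0 : forall N, (TB d x N.+1)`_0 != 0.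
  by move=> N; rewrite coef_TB /= subr0; case: hd => /eqP.
pose qq N := projT1 (cid (trunc_inv (TB d x N.+1) N.+1 (c0 N))).
have qqP : forall N, take_poly N.+1 (TB d x N.+1 * qq N) = take_poly N.+1 1.
  by move=> N; rewrite /qq; case: cid.
have qqS : forall M j, (j <= M)%N -> (qq j)`_j = (qq M)`_j.
  move=> M j hjM.
  have := trunc_uniq (TB d x j.+1) (qq j - qq M) j.+1 (c0 j).
  rewrite mulrBr linearB /= qqP -(TB_take d x j.+1 M.+1) // take_mull.
  rewrite -(take_take2 j.+1 M.+1 (TB d x M.+1 * qq M)) // qqP take_take2 // subrr => /(_ erefl).
  move=> /(congr1 (fun s : {poly F} => s`_j)) /=.
  by rewrite coef_take_poly ltnSn coefB coef0 => /eqP; rewrite subr_eq0 => /eqP.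
pose yc := fun e : int => if e <= - d then (qq (absz (- d - e)%R))`_(absz (- d - e)%R) else 0.
have yP : forall e, - d < e -> yc e = 0 by move=> e he; rewrite /yc leNgt he.
pose y := @Laurent F yc (- d) yP.
have hy : forall M, TB (- d) y M.+1 = take_poly M.+1 (qq M).
  move=> M; apply/polyP => j; rewrite coef_TB coef_take_poly; case: ifP => // hj.
  rewrite /= /yc ifT; last by lia.
  have -> : absz (- d - (- d - j%:Z))%R = j by lia.
  by apply: qqS.
exists y.
apply: (@eq_TB _ _ _ 0).
- by have := lmul_vanish vx (vanish_lbnd y); rewrite addrN.
- exact: lone_vanish.
case=> [|M]; first by apply/polyP => i; rewrite !coef_TB.
rewrite -[X in TB X _ _ = _](addrN d) (TB_mul M.+1 vx (vanish_lbnd y)) hy take_mulr qqP.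
by rewrite TB_one.
Qed.

End Inv.

Unset Implicit Arguments.
Section Exp.
Variable F : fieldType.
Implicit Types x y z : laurent F.
Implicit Types P Q : {poly F}.

Add Ring Lring2 : (@Lring F).

Lemma ident_shift (t eta : laurent F) Q P R P0 :
  leqser (lmul (lpoly R) t) (ladd (lpoly P0) eta) ->
  leqser (lmul (lpoly Q) eta) (lpoly P) ->
  leqser (lmul (lpoly (Q * R)) t) (lpoly (Q * P0 + P)).
Proof.
move=> /toL_eq H1 /toL_eq H2; apply: toL_inj.
move: H1 H2; rewrite !(toL_mul, toL_add) -!/(Lp _) !(Lp_add, Lp_mul).
move: (Lp Q) (Lp P) (Lp R) (Lp P0) (toL t) (toL eta) => q p r p0 t' e' H1 H2.
rewrite -H2.
transitivity (Lmul q (Lmul r t')); first by ring.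
rewrite H1; ring.
Qed.

Lemma ident_frac (t eta : laurent F) Q R P0 :
  leqser (lmul (lpoly R) t) (ladd (lpoly P0) eta) ->
  leqser (lmul (lpoly (R * Q)) t) (ladd (lpoly (Q * P0)) (lmul (lpoly Q) eta)).
Proof.
move=> /toL_eq H1; apply: toL_inj.
move: H1; rewrite !(toL_mul, toL_add) -!/(Lp _) !(Lp_add, Lp_mul).
move: (Lp Q) (Lp R) (Lp P0) (toL t) (toL eta) => q r p0 t' e' H1.
transitivity (Lmul q (Lmul r t')); first by ring.
rewrite H1; ring.
Qed.

Definition linv x : laurent F :=
  match pselect (exists y, leqser (lmul x y) (lone F)) with
  | left H => projT1 (cid H) | right _ => x end.

Lemma linvP x : ~ lzero x -> leqser (lmul x (linv x)) (lone F).
Proof.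
move=> nz; rewrite /linv; case: pselect => [H|H]; first by case: cid.
by exfalso; apply: H; apply: linv_exists.
Qed.

Fixpoint ces (eta : laurent F) (j : nat) : laurent F :=
  if j is j'.+1 then lfrac (linv (ces eta j')) else eta.
Definition cA (eta : laurent F) (j : nat) : {poly F} :=
  if j is j'.+1 then ppart (linv (ces eta j')) else 0.

Definition rational x := exists P Q, Q != 0 /\ leqser (lmul (lpoly Q) x) (lpoly P).

Lemma ces_rel eta j : ~ lzero (ces eta j) ->
  leqser (lmul (ces eta j) (ladd (lpoly (cA eta j.+1)) (ces eta j.+1))) (lone F).
Proof.
move=> nz; refine (@leqser_trans _ _ (lmul (ces eta j) (linv (ces eta j))) _ _ (linvP _ nz)).
apply: lmul_eq; first exact: leqser_refl.
exact: leqser_sym (ppart_frac _).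
Qed.

Lemma lzero_lpoly0 : lzero (lpoly (0 : {poly F})).
Proof. by move=> e; apply: lzerE. Qed.

Lemma rat_back (e e1 : laurent F) A :
  leqser (lmul e (ladd (lpoly A) e1)) (lone F) -> rational e1 -> rational e.
Proof.
move=> H [P [Q [hQ hr]]]; exists Q, (A * Q + P); split; last exact: ident_rat H hr.
apply/eqP => E; have := ident_rat H hr; rewrite E => h0.
have : lzero (lpoly Q) by refine (lzero_eq h0 _); apply: lmul_zero; exact: lzero_lpoly0.
by move/lpoly_zero => Q0; rewrite Q0 eqxx in hQ.
Qed.

Lemma lone_nz : ~ lzero (lone F).
Proof. by move=> H; have := H 0; rewrite /= coef1 /=; apply/eqP; apply: oner_neq0. Qed.

Lemma ces_nz eta : ~ rational eta -> forall j, ~ lzero (ces eta j).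
Proof.
move=> nrat k.
suff H : forall j i, (i <= j)%N -> ~ lzero (ces eta i) by exact (H k k (leqnn k)).
clear k.
have back : forall j, (forall i, (i <= j)%N -> ~ lzero (ces eta i)) ->
    forall m, (m <= j)%N -> rational (ces eta m) -> rational eta.
  move=> j IH; elim=> [|m IHm] hm hr //.
  apply: IHm; first exact: ltnW.
  exact: rat_back _ _ _ (ces_rel _ _ (IH m (ltnW hm))) hr.
elim=> [|j IH] i hi.
  move: hi; rewrite leqn0 => /eqP -> /= Z; apply: nrat.
  exists 0, 1; split; first exact: oner_neq0.
  apply: leqser_trans (lmul1 _) _ => e; rewrite Z; exact: (esym (lzerE _ e)).
case: (leqP i j) => [hij|hji]; first exact: IH.
have -> : i = j.+1 by apply/eqP; rewrite eqn_leq hi hji.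
move=> Z; apply: nrat; apply: (back j IH j (leqnn j)).
have rel := ces_rel _ _ (IH j (leqnn j)).
have rel' : leqser (lmul (lpoly (cA eta j.+1)) (ces eta j)) (lpoly 1).
  apply: leqser_trans (lmul_comm _ _) _; refine (@leqser_trans _ _ _ _ _ rel).
  apply: lmul_eq; first exact: leqser_refl.
  move=> e; have Ze := Z e; simpl in Ze |- *; by rewrite Ze addr0.
exists 1, (cA eta j.+1); split => //.
apply/eqP => A0; apply: lone_nz; refine (lzero_eq rel' _).
by rewrite A0; apply: lmul_zero; exact: lzero_lpoly0.
Qed.

Lemma lfrac_shift (t eta : laurent F) (r : nat) Q :
  leqser eta (lfrac (lmul (lpoly 'X^r) t)) ->
  leqser (lfrac (lmul (lpoly ('X^r * Q)) t)) (lfrac (lmul (lpoly Q) eta)).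
Proof.
move=> he.
have hz := ppart_frac (lmul (lpoly 'X^r) t).
apply: leqser_trans (lfrac_eq (ident_frac _ _ Q _ _ hz)) _.
apply: leqser_trans (lfrac_addp _ _) _.
apply: lfrac_eq; apply: lmul_eq; first exact: leqser_refl.
exact: leqser_sym he.
Qed.

Lemma exp2_le (R : realType) (a b : int) : a <= b -> (2%:R : R) ^ a <= 2%:R ^ b.
Proof.
move=> hab; have -> : b = a + (absz (b - a)%R)%:Z by lia.
rewrite expfzDr ?pnatr_eq0 // -exprnP ler_peMr ?exprz_ge0 ?ler0n //.
by rewrite exprn_ege1 // ler1n.
Qed.

Lemma value_eq (R : realType) (t es0 : laurent F) (r : nat) Q d :
  leqser es0 (lfrac (lmul (lpoly 'X^r) t)) -> Q != 0 ->
  is_deg (lfrac (lmul (lpoly Q) es0)) d ->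
  labs R (lpoly Q) * lnorm R (lmul (lpoly ('X^r * Q)) t) = 2%:R ^ (((size Q).-1)%:Z + d).
Proof.
move=> he hQ hd.
rewrite /lnorm (labs_eq _ (lfrac_shift _ _ _ Q he)) (labs_deg _ hd) (labs_deg _ (deg_lpoly hQ)).
by rewrite expfzDr // pnatr_eq0.
Qed.

Lemma rat_shift (t : laurent F) (r : nat) :
  is_irrational_ser t -> ~ rational (lfrac (lmul (lpoly 'X^r) t)).
Proof.
move=> hirr [P [Q [hQ h]]]; apply: hirr.
have hz := ppart_frac (lmul (lpoly 'X^r) t).
exists (Q * ppart (lmul (lpoly 'X^r) t) + P), (Q * 'X^r); split.
  by rewrite mulf_neq0 // monic_neq0 // monicXn.
exact: ident_shift _ _ _ _ _ _ hz h.
Qed.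

Lemma part2 (R : realType) (t : laurent F) : is_irrational_ser t ->
  forall D : nat, deficiency_le t D ->
  forall (r : nat) Q, Q != 0 ->
  (2%:R : R) ^ (- (D.+1)%:Z) <= labs R (lpoly Q) * lnorm R (lmul (lpoly ('X^r * Q)) t).
Proof.
move=> hirr D hdef r Q hQ.
set eta := lfrac (lmul (lpoly 'X^r) t).
have nz := ces_nz _ (rat_shift _ r hirr).
have fr : forall j, vanish (ces eta j) (-1) by case=> [|j]; exact: lfrac_vanish.
have rel : forall j, leqser (lmul (ces eta j) (ladd (lpoly (cA eta j.+1)) (ces eta j.+1))) (lone F).
  by move=> j; exact: ces_rel _ _ (nz j).
have hcf : cf_expansion eta (cA eta).
  exists (ces eta); split; first exact: leqser_refl.
  move=> j; split; first exact: nz.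
  by split; [exact: lfrac_id (fr j.+1) | exact: rel].
have HM := hdef r (cA eta) hcf.
have [d [hd hb]] := descent _ _ _ nz fr rel _ HM _ 0 Q (leqnn _) hQ.
rewrite (value_eq R _ _ _ _ _ (leqser_refl _) hQ hd).
apply: exp2_le; lia.
Qed.

Lemma bound_exp (R : realType) (c : R) (a : nat) :
  0 < c -> c <= 2%:R ^ (- a%:Z) -> (a <= (Num.Def.archi_bound c^-1).+1)%N.
Proof.
move=> c0 hc; rewrite leqNgt; apply/negP => ha.
have c0' : 0 <= c^-1 by rewrite invr_ge0 ltW.
have h1 := archi_boundP c0'.
have h2 : (2%:R : R) ^+ a <= c^-1.
  have hp : 0 < (2%:R : R) ^+ a by rewrite exprn_gt0 // ltr0n.
  rewrite -(invrK ((2%:R : R) ^+ a)) lef_pV2 ?posrE ?invr_gt0 //.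
  by rewrite exprnN.
have : (Num.Def.archi_bound c^-1 < 2 ^ a)%N.
  apply: ltn_trans (ltn_expl a (isT : (1 < 2)%N)); lia.
rewrite -(ltr_nat R) natrX => h3.
have := lt_le_trans (lt_le_trans h1 (ltW h3)) h2.
by rewrite ltxx.
Qed.

Lemma part1 (R : realType) (t : laurent F) (c : R) : 0 < c ->
  (forall (r : nat) Q, Q != 0 ->
        c <= labs R (lpoly Q) * lnorm R (lmul (lpoly ('X^r * Q)) t)) ->
  deficiency_le t (Num.Def.archi_bound c^-1).
Proof.
move=> c0 hc r A [es [h0 hj]] j hj0.
have nz : forall j, ~ lzero (es j) by move=> i; case: (hj i).
have rel : forall j, leqser (lmul (es j) (ladd (lpoly (A j.+1)) (es j.+1))) (lone F).
  by move=> i; case: (hj i) => _ [].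
have fr : forall j, vanish (es j) (-1).
  case=> [|i]; first exact: vanish_eq (leqser_sym h0) (lfrac_vanish _).
  by case: (hj i) => _ [h _]; exact: vanish_eq h (lfrac_vanish _).
have [Q [hQ [d [hd hsum]]]] := lifting _ _ _ nz fr rel j.-1 0.
have he : leqser (es 0) (lfrac (lmul (lpoly 'X^r) t)) by exact: h0.
have := hc r Q hQ; rewrite (value_eq R _ _ _ _ _ he hQ hd) hsum add0n prednK //.
by move/(bound_exp _ _ _ c0).
Qed.

End Exp.

Theorem lemma3 (R : realType) (p : nat) (theta : laurent 'F_p) :
  prime p -> is_irrational_ser theta ->
  ((exists c : R, 0 < c /\
      forall (r : nat) (Q : {poly 'F_p}), Q != 0 ->
        c <= labs R (lpoly Q) * lnorm R (lmul (lpoly ('X^r * Q)) theta))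
   <-> exists D : nat, deficiency_le theta D)
  /\
  (forall D : nat, deficiency_le theta D ->
     forall (r : nat) (Q : {poly 'F_p}), Q != 0 ->
       (2%:R : R) ^ (- (D.+1)%:Z) <= labs R (lpoly Q) * lnorm R (lmul (lpoly ('X^r * Q)) theta)).
Proof.
move=> _ hirr; split; last exact: part2.
split.
  by move=> [c [c0 hc]]; exists (Num.Def.archi_bound c^-1); exact: part1 _ _ _ c0 hc.
move=> [D hD]; exists (2%:R ^ (- (D.+1)%:Z)); split; last exact: part2.
by rewrite exprz_gt0 // ltr0n.
Qed.
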